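(* Let $p$ be a prime and $3\le k\le p$. Then for every $n$ and every subset $S\subseteq\mathbb{F}_p^n$ with $|S|\ge p^{1+(1-\frac1k)n}$, the set $(S-S)\setminus\{0\}$ contains a non-trivial $k$-term arithmetic progression, i.e. elements $y,y+d,\dots,y+(k-1)d$ with $d\ne0$.
   Context: $S-S=\{x-y:x,y\in S\}$. *)

(* Defs.v *)
From Stdlib Require Import Reals.
From HB Require Import structures.
From mathcomp Require Import all_boot all_order all_algebra.
Set Implicit Arguments. Unset Strict Implicit. Unset Printing Implicit Defensive.
Import GRing.Theory.
Local Open Scope ring_scope.

Definition diffset (V : finZmodType) (S : {set V}) : {set V} :=
  [set x - y | x in S, y in S].

Definition has_nontriv_AP (V : finZmodType) (k : nat) (A : {set V}) : Prop :=
  exists (y d : V), d != 0 /\ forall i : nat, (i < k)%nat -> y + d *+ i \in A.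

(* Main.v *)
Require Import Defs.
From Stdlib Require Import Reals.
From HB Require Import structures.
From mathcomp Require Import all_boot all_order all_algebra.
From Stdlib Require Import Lra.
From mathcomp Require Import zify.
Lemma INR_expn (p e : nat) : INR (p ^ e) = pow (INR p) e.
Proof.
elim: e => [|e IH]; first by [].
rewrite /=.
by rewrite expnS mult_INR IH.
Qed.

Lemma real_to_nat (p k n s : nat) : (0 < p)%N -> (0 < k)%N ->
  Rle (Rpower (INR p) (Rplus (IZR 1) (Rmult (Rminus (IZR 1) (Rinv (INR k))) (INR n)))) (INR s) ->
  (p ^ (k + (k-1)*n) <= s ^ k)%N.
Proof.
move=> hp0 hk0 H.
have P0 : Rlt 0 (INR p) by apply: lt_0_INR; apply/ltP.
have K0 : INR k <> IZR 0 by apply: not_0_INR => k0; rewrite k0 in hk0.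
set a := Rplus _ _ in H.
have Hpos : Rlt 0 (Rpower (INR p) a) by rewrite /Rpower; apply: exp_pos.
have E : pow (Rpower (INR p) a) k = INR (p ^ (k + (k-1)*n)).
  rewrite -Rpower_pow // Rpower_mult.
  have -> : Rmult a (INR k) = INR (k + (k-1)*n).
    rewrite plus_INR mult_INR minus_INR; last by apply/leP.
    rewrite /a /=. field. exact K0.
  by rewrite Rpower_pow // INR_expn.
apply/leP; apply: INR_le; rewrite -E INR_expn.
apply: pow_incr; split => //; lra.
Qed.

Set Implicit Arguments. Unset Strict Implicit. Unset Printing Implicit Defensive.
Import GRing.Theory.
Local Open Scope ring_scope.
Lemma lin2 (V : zmodType) (a a' b b' c c' : V) :
  (a - a') - (b - b') *+ 2 + (c - c') = (a - b *+ 2 + c) - (a' - b' *+ 2 + c').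
Proof.
rewrite mulrnBl opprB [b' *+ 2 - _]addrC [a - a' + _]addrACA [_ + (c - c')]addrACA.
congr (_ + _); by rewrite !opprD opprK.
Qed.

Section Core.
Variable V : finZmodType.
Variable m : nat.
Local Notation k := m.+3.
Local Notation FT := {ffun 'I_k -> V}.

Definition L2 (f : FT) : {ffun 'I_m.+1 -> V} :=
  [ffun i : 'I_m.+1 => f (inord i.+2) - f (inord i.+1) *+ 2 + f (inord i)].

Definition gbad (x : V * 'I_m.+4) : FT :=
  [ffun i : 'I_k => if (x.2 : nat) == k then x.1 else x.1 *+ i - x.1 *+ x.2].

Lemma pigeon (T : {set FT}) (M : nat) :
  (#|V| ^ m.+1 * M < #|T|)%N -> exists v, (M < #|[set f in T | L2 f == v]|)%N.
Proof.
move=> H; case: (boolP [exists v, (M < #|[set f in T | L2 f == v]|)%N]) => [/existsP //|].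
rewrite negb_exists => /forallP Hall; exfalso.
have : (#|T| <= #|V| ^ m.+1 * M)%N.
  have -> : #|T| = (\sum_(v : {ffun 'I_m.+1 -> V}) #|[set f in T | L2 f == v]|)%N.
    rewrite -sum1_card (partition_big L2 xpredT) //=.
    apply: eq_bigr => v _; rewrite -sum1_card; apply: eq_bigl => f.
    by rewrite inE.
  have -> : (#|V| ^ m.+1 = #|{: {ffun 'I_m.+1 -> V}}|)%N by rewrite card_ffun card_ord.
  rewrite -sum_nat_const.
  by apply: leq_sum => v _; rewrite leqNgt Hall.
by rewrite leqNgt H.
Qed.


Lemma step2 (y d a : V) : (y + (d + a)) *+ 2 - (y + a) = y + (d + (d + a)).
Proof.
rewrite mulr2n -addrA [X in _ + X](_ : _ = d); last by rewrite [y + _]addrC addrKA addrK.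
by rewrite -addrA [(d + a) + d]addrC.
Qed.

Lemma L2_AP (z : FT) : L2 z = 0 ->
  forall i : 'I_k, z i = z ord0 + (z (inord 1) - z ord0) *+ i.
Proof.
move=> hz.
set w := fun j : nat => z (inord j).
set d := z (inord 1) - z ord0.
have w0 : w 0%N = z ord0 by rewrite /w; congr (z _); apply: val_inj; rewrite /= inordK.
have rec : forall j : nat, (j < m.+1)%N -> w j.+2 = w j.+1 *+ 2 - w j.
  move=> j hj; have := congr1 (fun f : {ffun _ -> V} => f (inord j)) hz.
  rewrite !ffunE inordK // => /eqP; rewrite addr_eq0 subr_eq => /eqP.
  by rewrite /w => ->; rewrite addrC.
have key : forall j : nat, (j <= m.+1)%N -> w j = z ord0 + d *+ j /\ w j.+1 = z ord0 + d *+ j.+1.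
  elim=> [|j IH] hj.
    by rewrite w0 mulr0n addr0 mulr1n /d addrC subrK.
  have [h1 h2] := IH (ltnW hj); split => //.
  by rewrite rec // h1 h2 (mulrS d j.+1) (mulrS d j) step2.
move=> i; have zw : z i = w i by rewrite /w inord_val.
rewrite zw; case: i zw => [[|j] hj] /= _.
  by have [h _] := key 0%N isT.
by have [_ h] := key j hj.
Qed.


Lemma core (S : {set V}) :
  (m.+4 * #|V| ^ m.+2 < #|S| ^ m.+3)%N -> has_nontriv_AP k (diffset S :\ 0).
Proof.
move=> H.
pose T := [set f : FT | [forall i, f i \in S]].
have cT : #|T| = (#|S| ^ k)%N.
  have -> : (#|S| ^ k = #|S| ^ #|'I_k|)%N by rewrite card_ord.
  rewrite -(card_ffun_on _ (mem S)); apply: eq_card => f.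
  rewrite inE; apply/forallP/ffun_onP => h i; exact: h.
have [v hv] : exists v, (m.+4 * #|V| < #|[set f in T | L2 f == v]|)%N.
  apply: pigeon; by rewrite cT mulnCA -expnSr.
set F := [set f in T | L2 f == v] in hv.
have : exists s, s \in F.
  by apply/set0Pn; rewrite -card_gt0; apply: leq_ltn_trans hv.
case=> s sF.
pose Bad1 := [set (s - gbad x : FT) | x in [set: V * 'I_m.+4]].
have cB : (#|Bad1| <= m.+4 * #|V|)%N.
  apply: leq_trans (leq_imset_card _ _) _.
  by rewrite cardsT card_prod card_ord mulnC.
have : ~~ (F \subset Bad1).
  apply/negP => /subset_leq_card h.
  by move: (leq_trans h cB); rewrite leqNgt hv.
case/subsetPn => t tF tnB.
move: sF tF; rewrite !inE => /andP [/forallP sS /eqP Ls] /andP [/forallP tS /eqP Lt].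
pose z : FT := s - t.
have zE : forall i, z i = s i - t i by move=> i; rewrite /z !ffunE.
have Lz : L2 z = 0.
  apply/ffunP => i; have := congr1 (fun f : {ffun _ -> V} => f i) Lt.
  by rewrite -Ls !ffunE lin2 => ->; rewrite subrr.
have zAP := L2_AP Lz.
set y := z ord0 in zAP; set d := z (inord 1) - y in zAP.
exists y, d; split.
  apply/negP => /eqP d0; apply: (negP tnB); apply/imsetP; exists (y, ord_max).
    by rewrite inE.
  apply/ffunP => i; rewrite !ffunE /= eqxx.
  have := zAP i; rewrite zE d0 mul0rn addr0 => h.
  by rewrite -h opprB addrC subrK.
move=> i hi; pose j := Ordinal hi.
have hz : z j = y + d *+ i by rewrite zAP.
rewrite -hz in_setD1; apply/andP; split.
  apply/negP => /eqP zj0; apply: (negP tnB); apply/imsetP; exists (d, inord i).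
    by rewrite inE.
  have yE : y = - (d *+ i) by apply/eqP; rewrite -addr_eq0 -hz zj0.
  apply/ffunP => l; rewrite !ffunE /= inordK ?(leqW hi) // (ltn_eqF hi).
  have hl : s l - t l = d *+ l - d *+ i by rewrite -zE zAP yE addrC.
  by rewrite -hl opprB addrC subrK.
rewrite zE /diffset; apply/imset2P; exists (s j) (t j) => //.
Qed.

End Core.

Unset Implicit Arguments.

Theorem corollaryE (p k : nat) (hp : prime p) (hk3 : (3 <= k)%N) (hkp : (k <= p)%N)
  (n : nat) (S : {set 'rV['F_p]_n}) :
  Rle (Rpower (INR p) (Rplus (IZR 1) (Rmult (Rminus (IZR 1) (Rinv (INR k))) (INR n)))) (INR #|S|) ->
  has_nontriv_AP k (diffset S :\ 0).
Proof.
move=> H.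
have hp0 := prime_gt0 hp.
have hp1 := prime_gt1 hp.
have Hn := @real_to_nat p k n #|S| hp0 (leq_trans (isT : (0 < 3)%N) hk3) H.
case: k hk3 hkp H Hn => [|[|[|m]]] // _ hkp _ Hn.
have cV : #|{: 'rV['F_p]_n}| = (p ^ n)%N by rewrite card_mx card_Fp // mul1n.
apply: core; rewrite cV.
apply: (leq_trans _ Hn).
rewrite -expnM expnD subn1 /= [(m.+2 * n)%N]mulnC.
rewrite ltn_pmul2r ?expn_gt0 ?hp0 //.
have a : (2 <= p ^ m.+2)%N.
  apply: (leq_trans hp1); rewrite expnS leq_pmulr // expn_gt0 hp0 //.
rewrite expnS; apply: (@leq_trans (p * 2)); last exact: leq_mul (leqnn p) a.
rewrite muln2 -addnn; apply: (@leq_trans (m.+3 + m.+3)); first by lia.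
by rewrite leq_add.
Qed.
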